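(* Let $C=(1,c_2,\dots,c_n)$ be a canonical system. Then for each $1\le i\le n$, the subsystem $(1,c_2,\dots,c_i)$ is tight.
   Context: A system is a tuple $C=(c_1,\dots,c_n)$ of integers with $1=c_1<c_2<\dots<c_n$; for $k\le n$, $(c_1,\dots,c_k)$ is a subsystem. For a positive integer $v$, $\mathrm{opt}_C(v)$ is the minimum of $\sum_i x_i$ over $x\in\mathbb{Z}_{\ge0}^n$ with $\sum_i c_ix_i=v$. The greedy representation of $v$ is produced by: for $i=n$ down to $1$, while $c_i\le$ remaining value, take a coin $c_i$. $\mathrm{grd}_C(v)$ is its number of coins. A positive integer $w$ is a counterexample if $\mathrm{opt}_C(w)<\mathrm{grd}_C(w)$; $C$ is canonical if it has none, noncanonical otherwise. A system $(c_1,\dots,c_k)$ is tight if it has no counterexample smaller than $c_k$. *)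

(* Defs.v *)
From mathcomp Require Import all_boot.
Set Implicit Arguments. Unset Strict Implicit. Unset Printing Implicit Defensive.

(* A coin system C = (c_1,...,c_n) is represented as a seq nat (c_1 first). *)
Definition is_system (C : seq nat) : Prop :=
  head 0 C = 1 /\ sorted ltn C.

Definition subsystem (C : seq nat) (k : nat) : seq nat := take k C.

Definition is_rep (C : seq nat) (v : nat) (x : seq nat) : Prop :=
  size x = size C /\ \sum_(i < size C) nth 0 C i * nth 0 x i = v.

Definition ncoins (x : seq nat) : nat := \sum_(a <- x) a.

(* greedy: process coins from largest (c_n) down to c_1; with remaining value r,
   "while c <= r take a coin c" takes exactly r %/ c coins leaving r %% c.
   Returns (number of coins, remaining value). *)
Fixpoint greedy_desc (cs : seq nat) (r : nat) : nat * nat :=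
  match cs with
  | [::] => (0, r)
  | c :: cs' =>
      let k := r %/ c in
      let p := greedy_desc cs' (r %% c) in (k + p.1, p.2)
  end.

Definition grd (C : seq nat) (v : nat) : nat := (greedy_desc (rev C) v).1.

Definition counterexample (C : seq nat) (w : nat) : Prop :=
  0 < w /\ exists x, is_rep C w x /\ ncoins x < grd C w.

Definition canonical (C : seq nat) : Prop := forall w, ~ counterexample C w.

Definition tight (C : seq nat) : Prop :=
  forall w, w < last 0 C -> ~ counterexample C w.

(* Main.v *)
Require Import Defs.
From mathcomp Require Import all_boot.

Lemma greedy_skip (s t : seq nat) r :
  all (fun c => r < c) s -> greedy_desc (s ++ t) r = greedy_desc t r.
Proof.
elim: s => [|c s IH] //= /andP [hc hs].
rewrite (divn_small hc) (modn_small hc) IH; by case: (greedy_desc t r).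
Qed.

Theorem lemma1 (C : seq nat) :
  is_system C -> canonical C ->
  forall i, 1 <= i <= size C -> tight (subsystem C i).
Proof.
move=> [_ srt] can i /andP [i1 iC] w wlt [w0 [x [[sx sumx] nx]]].
apply: (can w); split => //.
rewrite /subsystem in wlt sx sumx nx.
have szt : size (take i C) = i by rewrite size_take_min; apply/minn_idPl.
have Hg : grd (take i C) w = grd C w.
  rewrite /grd -{2}(cat_take_drop i C) rev_cat greedy_skip //.
  case/lastP: (take i C) (cat_take_drop i C) szt wlt => [|t a] E; first by move=> h; move: i1; rewrite -h.
  move=> _; rewrite last_rcons => wa.
  have : sorted ltn (rcons t a ++ drop i C) by rewrite E.
  rewrite cat_rcons => {}srt.
  have : sorted ltn (a :: drop i C) by case: (cat_sorted2 srt).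
  move=> /= /(order_path_min ltn_trans) /allP H.
  apply/allP => c; rewrite mem_rev => cin.
  have ac := H c cin; exact: (ltn_trans wa ac).
exists (x ++ nseq (size C - i) 0); split; last first.
  by rewrite /ncoins big_cat /= big_nseq iter_fix // addn0 -Hg.
split; first by rewrite size_cat size_nseq sx szt subnKC.
rewrite -sumx szt -(big_mkord xpredT (fun j => nth 0 C j * nth 0 (x ++ nseq (size C - i) 0) j)).
rewrite (@big_cat_nat _ _ _ i 0 (size C) _ _ (leq0n i) iC) /=.
rewrite [X in _ + X]big1_seq ?addn0; last first.
  move=> j /andP [_]; rewrite mem_iota => /andP [ij _].
  by rewrite nth_cat sx szt ltnNge ij /= nth_nseq; case: ifP; rewrite muln0.
rewrite -(big_mkord xpredT (fun j => nth 0 (take i C) j * nth 0 x j)); apply: eq_big_nat => j /andP [_ ji].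
by rewrite nth_cat sx szt ji nth_take.
Qed.
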